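(* A Markov category $\mathcal C$ is positive if and only if for every object $X$ the copy morphism $\mathrm{copy}_X$ is an initial dilation of $\mathrm{id}_X$ and the class of deterministic morphisms of $\mathcal C$ coincides with the class of non-creative morphisms of $\mathcal C$.
   Context: A Markov category is a symmetric monoidal category $(\mathcal C,\otimes,I)$ with commutative comonoids $\mathrm{copy}_X\colon X\to X\otimes X$, $\mathrm{del}_X\colon X\to I$ compatible with $\otimes$, with $I$ terminal. $f\colon A\to X$ is deterministic if $\mathrm{copy}_X\circ f=(f\otimes f)\circ\mathrm{copy}_A$. $\mathcal C$ is positive if for all $f\colon X\to Y$, $g\colon Y\to Z$ with $g\circ f$ deterministic, $(\mathrm{id}_Y\otimes g)\circ\mathrm{copy}_Y\circ f=(f\otimes (g\circ f))\circ\mathrm{copy}_X$. A dilation of $p\colon A\to X$ is $\pi\colon A\to X\otimes E$ with $(\mathrm{id}_X\otimes\mathrm{del}_E)\circ\pi=p$. For a dilation $\pi\colon A\to X\otimes E$ and $f_1,f_2\colon E\to E'$, these are $\pi$-dilationally equal if for every dilation $\rho\colon A\to X\otimes E\otimes F$ of $\pi$, $(\mathrm{id}_X\otimes f_1\otimes\mathrm{id}_F)\circ\rho=(\mathrm{id}_X\otimes f_2\otimes\mathrm{id}_F)\circ\rho$. A dilation $\pi\colon A\to X\otimes E$ of $p$ is initial if for every dilation $\pi'\colon A\to X\otimes E'$ of $p$ there is $f\colon E\to E'$ with $(\mathrm{id}_X\otimes f)\circ\pi=\pi'$, unique up to $\pi$-dilational equality. A morphism $p\colon A\to X$ is non-creative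 if every dilation $\pi\colon A\to X\otimes E$ of $p$ equals $(p\otimes\mathrm{id}_E)\circ\iota$ for some dilation $\iota\colon A\to A\otimes E$ of $\mathrm{id}_A$. *)

(* Defs.v *)
Set Implicit Arguments.
Unset Strict Implicit.

Record MarkovCategory := {
  ob : Type;
  hom : ob -> ob -> Type;
  idm : forall (A : ob), hom A A;
  comp : forall (A B C : ob), hom B C -> hom A B -> hom A C;
  comp_idl : forall A B (f : hom A B), comp (idm B) f = f;
  comp_idr : forall A B (f : hom A B), comp f (idm A) = f;
  comp_assoc : forall A B C D (f : hom A B) (g : hom B C) (h : hom C D),
      comp h (comp g f) = comp (comp h g) f;
  tens : ob -> ob -> ob;
  tensm : forall A B C D, hom A B -> hom C D -> hom (tens A C) (tens B D);
  tens_id : forall A B, tensm (idm A) (idm B) = idm (tens A B);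
  tens_comp : forall A B C A' B' C' (f : hom A B) (g : hom B C)
      (f' : hom A' B') (g' : hom B' C'),
      tensm (comp g f) (comp g' f') = comp (tensm g g') (tensm f f');
  unit : ob;
  assoc : forall A B C, hom (tens (tens A B) C) (tens A (tens B C));
  assoc_inv : forall A B C, hom (tens A (tens B C)) (tens (tens A B) C);
  assoc_iso1 : forall A B C, comp (assoc_inv A B C) (assoc A B C) = idm _;
  assoc_iso2 : forall A B C, comp (assoc A B C) (assoc_inv A B C) = idm _;
  assoc_nat : forall A A' B B' C C' (f : hom A A') (g : hom B B') (h : hom C C'),
      comp (assoc A' B' C') (tensm (tensm f g) h)
      = comp (tensm f (tensm g h)) (assoc A B C);
  lunit : forall A, hom (tens unit A) A;
  lunit_inv : forall A, hom A (tens unit A);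
  lunit_iso1 : forall A, comp (lunit_inv A) (lunit A) = idm _;
  lunit_iso2 : forall A, comp (lunit A) (lunit_inv A) = idm _;
  lunit_nat : forall A B (f : hom A B),
      comp (lunit B) (tensm (idm unit) f) = comp f (lunit A);
  runit : forall A, hom (tens A unit) A;
  runit_inv : forall A, hom A (tens A unit);
  runit_iso1 : forall A, comp (runit_inv A) (runit A) = idm _;
  runit_iso2 : forall A, comp (runit A) (runit_inv A) = idm _;
  runit_nat : forall A B (f : hom A B),
      comp (runit B) (tensm f (idm unit)) = comp f (runit A);
  pentagon : forall A B C D,
      comp (assoc A B (tens C D)) (assoc (tens A B) C D)
      = comp (tensm (idm A) (assoc B C D))
             (comp (assoc A (tens B C) D) (tensm (assoc A B C) (idm D)));
  triangle : forall A B,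
      comp (tensm (idm A) (lunit B)) (assoc A unit B)
      = tensm (runit A) (idm B);
  swap : forall A B, hom (tens A B) (tens B A);
  swap_nat : forall A A' B B' (f : hom A A') (g : hom B B'),
      comp (swap A' B') (tensm f g) = comp (tensm g f) (swap A B);
  swap_invol : forall A B, comp (swap B A) (swap A B) = idm _;
  hexagon : forall A B C,
      comp (assoc B C A) (comp (swap A (tens B C)) (assoc A B C))
      = comp (tensm (idm B) (swap A C))
             (comp (assoc B A C) (tensm (swap A B) (idm C)));
  copy : forall A, hom A (tens A A);
  del : forall A, hom A unit;
  counit_l : forall A,
      comp (lunit A) (comp (tensm (del A) (idm A)) (copy A)) = idm A;
  counit_r : forall A,
      comp (runit A) (comp (tensm (idm A) (del A)) (copy A)) = idm A;
  coassoc : forall A,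
      comp (assoc A A A) (comp (tensm (copy A) (idm A)) (copy A))
      = comp (tensm (idm A) (copy A)) (copy A);
  cocomm : forall A, comp (swap A A) (copy A) = copy A;
  del_tens : forall A B,
      del (tens A B) = comp (lunit unit) (tensm (del A) (del B));
  copy_tens : forall A B,
      copy (tens A B)
      = comp (assoc_inv A B (tens A B))
         (comp (tensm (idm A) (assoc B A B))
          (comp (tensm (idm A) (tensm (swap A B) (idm B)))
           (comp (tensm (idm A) (assoc_inv A B B))
            (comp (assoc A A (tens B B))
                  (tensm (copy A) (copy B))))));
  copy_unit : copy unit = lunit_inv unit;
  unit_terminal : forall A (f : hom A unit), f = del A
}.

Arguments idm {m} A.
Arguments comp {m A B C} g f.
Arguments tensm {m A B C D} f g.
Arguments tens {m} A B.
Arguments unit {m}.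
Arguments assoc {m} A B C.
Arguments assoc_inv {m} A B C.
Arguments lunit {m} A.
Arguments lunit_inv {m} A.
Arguments runit {m} A.
Arguments runit_inv {m} A.
Arguments swap {m} A B.
Arguments copy {m} A.
Arguments del {m} A.

Section Notions.
Variable C : MarkovCategory.

Definition deterministic (A X : ob C) (f : hom A X) : Prop :=
  comp (copy X) f = comp (tensm f f) (copy A).

Definition positive : Prop :=
  forall (X Y Z : ob C) (f : hom X Y) (g : hom Y Z),
    deterministic (comp g f) ->
    comp (tensm (idm Y) g) (comp (copy Y) f)
    = comp (tensm f (comp g f)) (copy X).

Definition dilation (A X E : ob C) (p : hom A X) (pi : hom A (tens X E)) : Prop :=
  comp (runit X) (comp (tensm (idm X) (del E)) pi) = p.

Definition dilationally_equal (A X E E' : ob C) (pi : hom A (tens X E))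
    (f1 f2 : hom E E') : Prop :=
  forall (F : ob C) (rho : hom A (tens (tens X E) F)),
    dilation pi rho ->
    comp (tensm (tensm (idm X) f1) (idm F)) rho
    = comp (tensm (tensm (idm X) f2) (idm F)) rho.

Definition initial_dilation (A X E : ob C) (p : hom A X) (pi : hom A (tens X E))
    : Prop :=
  dilation p pi /\
  forall (E' : ob C) (pi' : hom A (tens X E')),
    dilation p pi' ->
    (exists f : hom E E', comp (tensm (idm X) f) pi = pi') /\
    (forall f1 f2 : hom E E',
        comp (tensm (idm X) f1) pi = pi' ->
        comp (tensm (idm X) f2) pi = pi' ->
        dilationally_equal pi f1 f2).

Definition non_creative (A X : ob C) (p : hom A X) : Prop :=
  forall (E : ob C) (pi : hom A (tens X E)),
    dilation p pi ->
    exists iota : hom A (tens A E),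
      dilation (idm A) iota /\ pi = comp (tensm p (idm E)) iota.

End Notions.

(* Main.v *)
Require Import Defs.

Section S.
Variable M : MarkovCategory.
Local Notation "g ∘ f" := (comp g f) (at level 41, right associativity).
Local Notation "f ⊗ g" := (tensm f g) (at level 38, left associativity).
Local Notation I := (@unit M).

Ltac ra := repeat rewrite <- comp_assoc.

Lemma tl {A B D E : ob M} {a : hom B D} {b : hom A B} {c : hom A D} :
  a ∘ b = c -> forall (r : hom E A), a ∘ (b ∘ r) = c ∘ r.
Proof. intros H r. rewrite comp_assoc, H. reflexivity. Qed.

Ltac rw L := first [rewrite (tl L) | rewrite L]; ra.
Ltac rwc L := let H := fresh "H" in
  pose proof L as H; repeat rewrite comp_assoc in H; repeat rewrite comp_assoc;
  rewrite H; clear H; ra.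
Ltac rwb L := first [rewrite (tl (eq_sym L)) | rewrite <- L]; ra.

Lemma tm {A B D A' B' D' : ob M} (f : hom A B) (g : hom B D) (f' : hom A' B') (g' : hom B' D') :
  (g ⊗ g') ∘ (f ⊗ f') = (g ∘ f) ⊗ (g' ∘ f').
Proof. symmetry. apply tens_comp. Qed.

Lemma mono_cancel {A B D : ob M} (j : hom B D) (i : hom D B) :
  i ∘ j = idm B -> forall (f g : hom A B), j ∘ f = j ∘ g -> f = g.
Proof.
  intros H f g E. rewrite <- (comp_idl f), <- (comp_idl g), <- H.
  rewrite <- !comp_assoc, E. reflexivity.
Qed.

Lemma epi_cancel {A B D : ob M} (j : hom A B) (i : hom B A) :
  j ∘ i = idm B -> forall (f g : hom B D), f ∘ j = g ∘ j -> f = g.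
Proof.
  intros H f g E. rewrite <- (comp_idr f), <- (comp_idr g), <- H.
  rewrite !comp_assoc, E. reflexivity.
Qed.

Lemma assoc_inv_nat {A A' B B' D D' : ob M} (f : hom A A') (g : hom B B') (h : hom D D') :
  assoc_inv A' B' D' ∘ (f ⊗ (g ⊗ h)) = ((f ⊗ g) ⊗ h) ∘ assoc_inv A B D.
Proof.
  apply (epi_cancel (assoc A B D) (assoc_inv A B D) (assoc_iso2 _ _ _)).
  ra. rw (assoc_iso1 A B D). rewrite comp_idr. rwb (assoc_nat f g h).
  rw (assoc_iso1 A' B' D'). rewrite comp_idl. reflexivity.
Qed.

Lemma kelly2 (X Y : ob M) : (idm X ⊗ runit Y) ∘ assoc X Y I = runit (tens X Y).
Proof.
  apply (epi_cancel (runit (tens (tens X Y) I)) (runit_inv _) (runit_iso2 _)).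
  rewrite <- (runit_nat ((idm X ⊗ runit Y) ∘ assoc X Y I)), <- (runit_nat (runit (tens X Y))).
  f_equal.
  apply (mono_cancel (assoc X Y I) (assoc_inv _ _ _) (assoc_iso1 _ _ _)).
  rewrite <- (@triangle M (tens X Y) I).
  rewrite <- (tens_id X Y).
  rewrite comp_assoc, assoc_nat. ra. rewrite pentagon.
  rewrite comp_assoc, tm, triangle, comp_idl.
  rewrite comp_assoc, <- assoc_nat. ra. rewrite tm, comp_idl. reflexivity.
Qed.

Lemma tsl {A B D E : ob M} (f : hom A B) (g : hom B D) :
  (g ∘ f) ⊗ idm E = (g ⊗ idm E) ∘ (f ⊗ idm E).
Proof. rewrite tm, comp_idl. reflexivity. Qed.

Lemma tsr {A B D E : ob M} (f : hom A B) (g : hom B D) :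
  idm E ⊗ (g ∘ f) = (idm E ⊗ g) ∘ (idm E ⊗ f).
Proof. rewrite tm, comp_idl. reflexivity. Qed.

Lemma kelly1 (X Y : ob M) : lunit (tens X Y) ∘ assoc I X Y = lunit X ⊗ idm Y.
Proof.
  apply (epi_cancel (lunit (tens (tens I X) Y)) (lunit_inv _) (lunit_iso2 _)).
  rewrite <- (lunit_nat (lunit (tens X Y) ∘ assoc I X Y)), <- (lunit_nat (lunit X ⊗ idm Y)).
  f_equal.
  assert (Hj : (assoc I (tens I X) Y ∘ (assoc I I X ⊗ idm Y)) ∘
               ((assoc_inv I I X ⊗ idm Y) ∘ assoc_inv I (tens I X) Y) = idm _).
  { ra. rw (tm (assoc_inv I I X) (assoc I I X) (idm Y) (idm Y)).
    rewrite assoc_iso2, comp_idl, tens_id, comp_idl, assoc_iso2. reflexivity. }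
  apply (epi_cancel _ _ Hj). ra.
  rewrite tsr. ra.
  rwb (pentagon I I X Y).
  rw (triangle I (tens X Y)).
  rewrite <- (tens_id X Y).
  rwb (assoc_nat (runit I) (idm X) (idm Y)).
  rewrite <- (triangle I X).
  rewrite tsl. ra.
  rw (assoc_nat (idm I) (lunit X) (idm Y)).
  ra. reflexivity.
Qed.

Lemma kelly1' (X Y : ob M) : (lunit X ⊗ idm Y) ∘ assoc_inv I X Y = lunit (tens X Y).
Proof. rewrite <- kelly1. ra. rewrite assoc_iso2, comp_idr. reflexivity. Qed.

Lemma kelly2' (X Y : ob M) : runit (tens X Y) ∘ assoc_inv X Y I = idm X ⊗ runit Y.
Proof. rewrite <- kelly2. ra. rewrite assoc_iso2, comp_idr. reflexivity. Qed.

Lemma tsplit1 {A B D E : ob M} (f : hom A B) (g : hom D E) : f ⊗ g = (idm B ⊗ g) ∘ (f ⊗ idm D).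
Proof. rewrite tm, comp_idl, comp_idr. reflexivity. Qed.

Lemma tsplitW {A B D E F : ob M} (f : hom A B) (g : hom E F) (h : hom D E) :
  f ⊗ (g ∘ h) = (idm B ⊗ g) ∘ (f ⊗ h).
Proof. rewrite tm, comp_idl. reflexivity. Qed.

Lemma cohP (A B : ob M) :
  (lunit B ⊗ runit A) ∘ assoc_inv I B (tens A I)
   ∘ (idm I ⊗ (assoc B A I ∘ (swap A B ⊗ idm I) ∘ assoc_inv A B I)) ∘ assoc I A (tens B I)
  = swap A B ∘ (lunit A ⊗ runit B).
Proof.
  rewrite (tsplit1 (lunit B) (runit A)). ra.
  rw (kelly1' B (tens A I)).
  rwb (lunit_nat (idm B ⊗ runit A)).
  rw (tm (idm I) (idm I) (assoc B A I ∘ (swap A B ⊗ idm I) ∘ assoc_inv A B I) (idm B ⊗ runit A)).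
  rewrite (comp_idl (idm I)).
  rw (kelly2 B A). rw (runit_nat (swap A B)). rewrite (kelly2' A B).
  rewrite tsr. ra.
  rw (lunit_nat (swap A B)). rw (lunit_nat (idm A ⊗ runit B)).
  rewrite (kelly1 A (tens B I)).
  rewrite tm, comp_idl, comp_idr. reflexivity.
Qed.

Definition m1 (X E : ob M) : hom (tens X E) X := runit X ∘ (idm X ⊗ del E).
Definition m2 (X E : ob M) : hom (tens X E) E := lunit E ∘ (del X ⊗ idm E).

Lemma cohQ (A B : ob M) :
  (idm B ⊗ (idm A ⊗ del B)) ∘ assoc B A B ∘ (swap A B ⊗ idm B) ∘ assoc_inv A B B
  = (assoc B A I ∘ (swap A B ⊗ idm I) ∘ assoc_inv A B I) ∘ (idm A ⊗ (idm B ⊗ del B)).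
Proof.
  ra.
  rwb (assoc_nat (idm B) (idm A) (del B)).
  rw (tm (swap A B) (idm B ⊗ idm A) (idm B) (del B)).
  rewrite (tens_id B A), comp_idl, comp_idr.
  rewrite (assoc_inv_nat (idm A) (idm B) (del B)).
  rw (tm (idm A ⊗ idm B) (swap A B) (del B) (idm I)).
  rewrite (tens_id A B), comp_idl, comp_idr. reflexivity.
Qed.

Lemma cohS (A B : ob M) :
  (m2 A B ⊗ m1 A B) ∘ assoc_inv A B (tens A B) ∘ (idm A ⊗ assoc B A B)
   ∘ (idm A ⊗ (swap A B ⊗ idm B)) ∘ (idm A ⊗ assoc_inv A B B) ∘ assoc A A (tens B B)
  = swap A B ∘ (m2 A A ⊗ m1 B B).
Proof.
  unfold m1, m2.
  rewrite <- (tm (del A ⊗ idm B) (lunit B) (idm A ⊗ del B) (runit A)).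
  rewrite <- (tm (del A ⊗ idm A) (lunit A) (idm B ⊗ del B) (runit B)).
  ra.
  rwb (assoc_inv_nat (del A) (idm B) (idm A ⊗ del B)).
  rw (tm (idm A) (del A) (assoc B A B) (idm B ⊗ (idm A ⊗ del B))).
  rewrite (comp_idr (del A)).
  rw (tm (idm A) (del A) (swap A B ⊗ idm B) ((idm B ⊗ (idm A ⊗ del B)) ∘ assoc B A B)).
  rewrite (comp_idr (del A)).
  rw (tm (idm A) (del A) (assoc_inv A B B)
        ((idm B ⊗ (idm A ⊗ del B)) ∘ assoc B A B ∘ (swap A B ⊗ idm B))).
  rewrite (comp_idr (del A)).
  rewrite cohQ.
  rewrite (tsplitW (del A) (assoc B A I ∘ (swap A B ⊗ idm I) ∘ assoc_inv A B I) (idm A ⊗ (idm B ⊗ del B))).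
  ra.
  rwb (assoc_nat (del A) (idm A) (idm B ⊗ del B)).
  pose proof (f_equal (fun h => h ∘ ((del A ⊗ idm A) ⊗ (idm B ⊗ del B))) (cohP A B)) as H. cbv beta in H. repeat rewrite <- comp_assoc in H. rewrite H. reflexivity.
Qed.

Lemma m1_copy (X : ob M) : m1 X X ∘ copy X = idm X.
Proof. unfold m1. ra. apply counit_r. Qed.
Lemma m2_copy (X : ob M) : m2 X X ∘ copy X = idm X.
Proof. unfold m2. ra. apply counit_l. Qed.

Lemma cohK (A B : ob M) : (m2 A B ⊗ m1 A B) ∘ copy (tens A B) = swap A B.
Proof.
  rewrite copy_tens. ra. rwc (cohS A B).
  rewrite tm, m2_copy, m1_copy, tens_id, comp_idr. reflexivity.
Qed.

Lemma tsplit2 {A B D E : ob M} (f : hom A B) (g : hom D E) : f ⊗ g = (f ⊗ idm E) ∘ (idm A ⊗ g).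
Proof. rewrite tm, comp_idl, comp_idr. reflexivity. Qed.

Ltac merge := repeat (rw (tm _ _ _ _)); repeat rewrite comp_idl; repeat rewrite comp_idr.

Lemma m1_tens {X Y E E' : ob M} (f : hom X Y) (g : hom E E') : m1 Y E' ∘ (f ⊗ g) = f ∘ m1 X E.
Proof.
  unfold m1. ra. rw (tm f (idm Y) g (del E')). rewrite comp_idl.
  rewrite (unit_terminal (del E' ∘ g)). rewrite (tsplit2 f (del E)). rw (runit_nat f). reflexivity.
Qed.

Lemma m2_tens {X Y E E' : ob M} (f : hom X Y) (g : hom E E') : m2 Y E' ∘ (f ⊗ g) = g ∘ m2 X E.
Proof.
  unfold m2. ra. rw (tm f (del Y) g (idm E')). rewrite comp_idl.
  rewrite (unit_terminal (del Y ∘ f)). rewrite (tsplit1 (del X) g). rw (lunit_nat g). reflexivity.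
Qed.

Lemma cohC1 (X F : ob M) : m1 X (tens X F) ∘ assoc X X F = m1 X X ∘ m1 (tens X X) F.
Proof.
  unfold m1. ra. rewrite del_tens. rewrite tsr. ra.
  rwb (assoc_nat (idm X) (del X) (del F)).
  rw (triangle X I).
  rwb (runit_nat (idm X ⊗ del X)).
  rwb (runit_nat (runit X)).
  rw (tm (idm (tens X X)) (idm X ⊗ del X) (del F) (idm I)).
  rewrite comp_idr, comp_idl. reflexivity.
Qed.

Lemma cohC2 (X F : ob M) : m1 X F ∘ m2 X (tens X F) ∘ assoc X X F = m2 X X ∘ m1 (tens X X) F.
Proof.
  unfold m1, m2. ra. rewrite <- (tens_id X F).
  rwb (assoc_nat (del X) (idm X) (idm F)).
  rw (kelly1 X F).
  rwb (runit_nat (del X ⊗ idm X)).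
  rwb (runit_nat (lunit X)).
  rw (tm (lunit X) (idm X) (idm F) (del F)).
  rewrite (comp_idl (lunit X)), (comp_idr (del F)).
  rw (tm (del X ⊗ idm X) (lunit X) (idm F) (del F)).
  rewrite (comp_idr (del F)).
  rw (tm (del X ⊗ idm X) (lunit X) (idm I) (idm I)).
  rewrite (comp_idl (idm I)).
  rw (tm (idm (tens X X)) (lunit X ∘ (del X ⊗ idm X)) (del F) (idm I)).
  rewrite (comp_idr (del X ⊗ idm X)), (comp_idl (del F)). reflexivity.
Qed.

Lemma dil_iff {A X E : ob M} (p : hom A X) (pi : hom A (tens X E)) :
  dilation p pi <-> m1 X E ∘ pi = p.
Proof. unfold dilation, m1. ra. tauto. Qed.

Lemma det_id (X : ob M) : deterministic (idm X).
Proof. unfold deterministic. rewrite comp_idr, tens_id, comp_idl. reflexivity. Qed.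

Lemma lemB (Hp : positive M) {A X E : ob M} (pi : hom A (tens X E)) :
  deterministic (m1 X E ∘ pi) -> pi = ((m1 X E ∘ pi) ⊗ (m2 X E ∘ pi)) ∘ copy A.
Proof.
  intros Hd.
  pose proof (Hp _ _ _ pi (m1 X E) Hd) as H.
  apply (f_equal (fun h => (m2 X E ⊗ idm X) ∘ h)) in H. cbv beta in H.
  rewrite (tl (tm (idm (tens X E)) (m2 X E) (m1 X E) (idm X))) in H.
  rewrite comp_idr, comp_idl in H.
  rewrite (tl (cohK X E)) in H.
  rewrite (tl (tm pi (m2 X E) (m1 X E ∘ pi) (idm X))) in H.
  rewrite (comp_idl (m1 X E ∘ pi)) in H.
  rewrite <- (cocomm A).
  rewrite (tl (eq_sym (swap_nat (m2 X E ∘ pi) (m1 X E ∘ pi)))).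
  rewrite <- comp_assoc.   rewrite <- H.
  rewrite (tl (swap_invol X E)). rewrite comp_idl. reflexivity.
Qed.

Lemma L_rho (X F E' : ob M) (f : hom X E') (k : hom X F) :
  ((idm X ⊗ f) ⊗ idm F) ∘ assoc_inv X X F ∘ (idm X ⊗ ((idm X ⊗ k) ∘ copy X)) ∘ copy X
  = (((idm X ⊗ f) ∘ copy X) ⊗ k) ∘ copy X.
Proof.
  rwb (assoc_inv_nat (idm X) f (idm F)).
  rewrite (tsr (copy X) (idm X ⊗ k)). ra.
  rw (tm (idm X) (idm X) (idm X ⊗ k) (f ⊗ idm F)).
  rewrite (comp_idl (idm X)).
  rewrite (tm (idm X) f k (idm F)), (comp_idr f), (comp_idl k).
  rwb (coassoc X).
  rw (assoc_inv_nat (idm X) f k).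
  rw (assoc_iso1 X X X). rewrite (comp_idl ((copy X ⊗ idm X) ∘ copy X)).
  rw (tm (copy X) (idm X ⊗ f) (idm X) k). rewrite (comp_idr k). reflexivity.
Qed.

Lemma main : positive M <->
  ((forall X : ob M, initial_dilation (idm X) (copy X)) /\ (forall (A X : ob M) (p : hom A X), deterministic p <-> non_creative p)).
Proof.
  split.
  - intro Hp. split.
    + intro X. split. { apply dil_iff. apply m1_copy. }
      intros E' pi' Hd. apply dil_iff in Hd.
      pose proof (lemB Hp pi') as Hpi. rewrite Hd in Hpi. specialize (Hpi (det_id X)).
      split. { exists (m2 X E' ∘ pi'). symmetry. exact Hpi. }
      intros f1 f2 H1 H2 F rho Hrho. apply dil_iff in Hrho.
      set (tau := assoc X X F ∘ rho).
      assert (Ht1 : m1 X (tens X F) ∘ tau = idm X).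
      { unfold tau. rwc (cohC1 X F). rewrite Hrho. apply m1_copy. }
      pose proof (lemB Hp tau) as HB1. rewrite Ht1 in HB1. specialize (HB1 (det_id X)).
      set (h := m2 X (tens X F) ∘ tau) in *.
      assert (Hh1 : m1 X F ∘ h = idm X).
      { unfold h, tau. rwc (cohC2 X F). rewrite Hrho. apply m2_copy. }
      pose proof (lemB Hp h) as HB2. rewrite Hh1 in HB2. specialize (HB2 (det_id X)).
      set (k := m2 X F ∘ h) in *.
      assert (Hrho' : rho = assoc_inv X X F ∘ tau).
      { unfold tau. rewrite comp_assoc, assoc_iso1, comp_idl. reflexivity. }
      rewrite Hrho', HB1, HB2. ra.
      rewrite (L_rho X F E' f1 k), (L_rho X F E' f2 k), H1, H2. reflexivity.
    + intros A X p. split.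
      * intros Hdet E pi Hpi. apply dil_iff in Hpi.
        pose proof (lemB Hp pi) as HB. rewrite Hpi in HB. specialize (HB Hdet).
        exists ((idm A ⊗ (m2 X E ∘ pi)) ∘ copy A). split.
        { apply dil_iff. rewrite (tl (m1_tens (idm A) (m2 X E ∘ pi))). ra.
          rewrite comp_idl. apply m1_copy. }
        { transitivity ((p ⊗ (m2 X E ∘ pi)) ∘ copy A); [exact HB|]. rw (tm (idm A) p (m2 X E ∘ pi) (idm E)).
          rewrite (comp_idr p), (comp_idl (m2 X E ∘ pi)). reflexivity. }
      * intros Hnc. destruct (Hnc X (copy X ∘ p)) as [iota [Hi Heq]].
        { apply dil_iff. rwc (m1_copy X). rewrite comp_idl. reflexivity. }
        apply dil_iff in Hi.
        pose proof (lemB Hp iota) as HB. rewrite Hi in HB. specialize (HB (det_id A)).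
        rewrite HB in Heq.
        rewrite (tl (tm (idm A) p (m2 A X ∘ iota) (idm X))) in Heq.
        rewrite (comp_idr p), (comp_idl (m2 A X ∘ iota)) in Heq.
        assert (Hh : m2 A X ∘ iota = p).
        { pose proof (f_equal (fun h => m2 X X ∘ h) Heq) as H2. cbv beta in H2.
          rewrite (tl (m2_copy X)), comp_idl in H2.
          rewrite (tl (m2_tens p (m2 A X ∘ iota))) in H2.
          repeat rewrite <- comp_assoc in H2. rewrite (m2_copy A), comp_idr in H2.
          symmetry. exact H2. }
        unfold deterministic. rewrite Hh in Heq. exact Heq.
  - intros [Hinit Hdn]. intros X Y Z f g Hdet.
    pose proof (proj1 (Hdn _ _ (g ∘ f)) Hdet) as Hnc.
    destruct (Hnc Y ((g ⊗ idm Y) ∘ copy Y ∘ f)) as [iota [Hi Heq]].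
    { apply dil_iff. rewrite (tl (m1_tens g (idm Y))). ra.
      rw (m1_copy Y). rewrite comp_idl. reflexivity. }
    destruct (Hinit X) as [_ Hi2].
    destruct (Hi2 Y iota Hi) as [[h Hh] _].
    rewrite <- Hh in Heq. repeat rewrite <- comp_assoc in Heq.
    rewrite (tl (tm (idm X) (g ∘ f) h (idm Y))) in Heq.
    rewrite (comp_idr (g ∘ f)), (comp_idl h) in Heq.
    assert (Hhf : h = f).
    { pose proof (f_equal (fun k => m2 Z Y ∘ k) Heq) as H2. cbv beta in H2.
      rewrite (tl (m2_tens g (idm Y))) in H2.
      rewrite (tl (m2_tens (g ∘ f) h)) in H2.
      repeat rewrite <- comp_assoc in H2.
      rewrite (m2_copy X) in H2. rewrite (tl (m2_copy Y)) in H2.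
      rewrite !comp_idl, comp_idr in H2. symmetry. exact H2. }
    rewrite Hhf in Heq.
    apply (f_equal (fun k => swap Z Y ∘ k)) in Heq. cbv beta in Heq.
    rewrite (tl (swap_nat g (idm Y))) in Heq.
    rewrite (tl (swap_nat (g ∘ f) f)) in Heq.
    repeat rewrite <- comp_assoc in Heq.
    rewrite (tl (cocomm Y)) in Heq. rewrite (cocomm X) in Heq.
    exact Heq.
Qed.

End S.

Theorem corollary4p16 (C : MarkovCategory) :
  positive C <->
  ((forall X : ob C, initial_dilation (idm X) (copy X)) /\
   (forall (A X : ob C) (p : hom A X), deterministic p <-> non_creative p)).
Proof. exact (main C). Qed.
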